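(* Let $m\ge 1$, let $\mathcal{I}\subseteq\mathcal{M}_m$ be a decreasing monomial set with $r=\max_{f\in\mathcal{I}}\deg f$, let $f,g\in\mathcal{I}_r$ and $h=\gcd(f,g)\in\mathcal{M}_m$. Then \[ {\rm LTA}(m,2)\cdot h\cdot \Big({\rm LTA}(m,2)\cdot \tfrac{f}{h}+{\rm LTA}(m,2)\cdot \tfrac{g}{h}\Big)= {\rm LTA}(m,2)_h\cdot h\cdot \Big({\rm LTA}(m,2)_{f}\cdot \tfrac{f}{h}+{\rm LTA}(m,2)_g\cdot \tfrac{g}{h}\Big). \]
   Context: $\mathbf{R}_m=\mathbb{F}_2[x_0,\dots,x_{m-1}]/(x_0^2-x_0,\dots,x_{m-1}^2-x_{m-1})$. $\mathcal{M}_m$ is the set of monomials $x_0^{i_0}\cdots x_{m-1}^{i_{m-1}}$, $i_j\in\{0,1\}$. For a monomial $f$, $\operatorname{ind}(f)$ is the set of indices of variables dividing $f$, $\deg f=|\operatorname{ind}(f)|$; $\gcd(f,g)$ has $\operatorname{ind}=\operatorname{ind}(f)\cap\operatorname{ind}(g)$; for $h\mid f$, $f/h$ has $\operatorname{ind}=\operatorname{ind}(f)\setminus\operatorname{ind}(h)$. Order: $f\preceq_w g$ iff $\operatorname{ind}(f)\subseteq\operatorname{ind}(g)$; for equal-degree $f=x_{i_1}\cdots x_{i_s}$, $g=x_{j_1}\cdots x_{j_s}$ (increasing indices), $f\preceq_{sh}g$ iff $i_\ell\le j_\ell$ for all $\ell$; $f\preceq g$ iff $f\preceq_{sh}g^*\preceq_w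 g$ for some $g^*$. $\mathcal{I}$ is decreasing if $f\in\mathcal{I}$, $g\preceq f$ imply $g\in\mathcal{I}$; $\mathcal{I}_r=\{f\in\mathcal{I}:\deg f=r\}$. ${\rm LTA}(m,2)$ is the set of pairs $(\mathbf{B},\varepsilon)$ with $\mathbf{B}=(b_{i,j})\in\mathbb{F}_2^{m\times m}$ lower triangular with ones on the diagonal and $\varepsilon\in\mathbb{F}_2^m$; for a monomial $u$, $(\mathbf{B},\varepsilon)\cdot u\in\mathbf{R}_m$ replaces each variable $x_i$ of $u$ by $x_i+\sum_{j<i}b_{i,j}x_j+\varepsilon_i$. For a monomial $g$, ${\rm LTA}(m,2)_g$ is the set of $(\mathbf{B},\varepsilon)\in{\rm LTA}(m,2)$ with $\varepsilon_i=0$ for $i\notin\operatorname{ind}(g)$ and $b_{i,j}=0$ (for $j<i$) whenever $i\notin\operatorname{ind}(g)$ or $j\in\operatorname{ind}(g)$. For $G\subseteq{\rm LTA}(m,2)$ and monomial $u$, $G\cdot u=\{(\mathbf{B},\varepsilon)\cdot u:(\mathbf{B},\varepsilon)\in G\}$. For sets $\mathcal{S},\mathcal{T}\subseteq\mathbf{R}_m$: $\mathcal{S}+\mathcal{T}=\{s+t\}$, $\mathcal{S}\cdot\mathcal{T}=\{st\}$; $G\cdot h\cdot(\mathcal{S})$ is the product of the set $G\cdot h$ with the set $\mathcal{S}$. *)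

(* Defs.v *)
From mathcomp Require Import all_boot all_order all_algebra.
Set Implicit Arguments. Unset Strict Implicit. Unset Printing Implicit Defensive.
Import GRing.Theory.
Local Open Scope ring_scope.

(* Points of F_2^m and the ring R_m = F_2[x_0..x_{m-1}]/(x_i^2 - x_i),
   realised as the ring of functions F_2^m -> F_2 (evaluation isomorphism). *)
Definition pt (m : nat) := {ffun 'I_m -> 'F_2}.
Definition Rm (m : nat) := {ffun pt m -> 'F_2}.

Definition Radd m (p q : Rm m) : Rm m := [ffun v => p v + q v].
Definition Rmul m (p q : Rm m) : Rm m := [ffun v => p v * q v].

(* A monomial is represented by its index set ind(f). *)
Definition monomial (m : nat) := {set 'I_m}.
Definition deg m (f : monomial m) : nat := #|f|.
Definition mgcd m (f g : monomial m) : monomial m := f :&: g.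
Definition mdiv m (f h : monomial m) : monomial m := f :\: h.

Definition sidx m (f : monomial m) : seq nat := sort leq [seq val i | i <- enum f].

Definition weak_le m (f g : monomial m) : bool := f \subset g.
Definition shift_le m (f g : monomial m) : bool :=
  (deg f == deg g) && all2 leq (sidx f) (sidx g).
Definition mle m (f g : monomial m) : Prop :=
  exists gs : monomial m, shift_le f gs /\ weak_le gs g.

Definition decreasing m (I : {set monomial m}) : Prop :=
  forall f g, f \in I -> mle g f -> g \in I.

Definition maxdeg m (I : {set monomial m}) : nat := \max_(f in I) deg f.

Definition LTA m (B : 'M['F_2]_m) (e : 'rV['F_2]_m) : Prop :=
  (forall i j : 'I_m, (i < j)%N -> B i j = 0) /\ (forall i : 'I_m, B i i = 1).

Definition LTA_g m (g : monomial m) (B : 'M['F_2]_m) (e : 'rV['F_2]_m) : Prop :=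
  LTA B e /\ (forall i : 'I_m, i \notin g -> e 0 i = 0) /\
  (forall i j : 'I_m, (j < i)%N -> (i \notin g) || (j \in g) -> B i j = 0).

(* (B,e) . u : replace x_i by x_i + sum_{j<i} b_ij x_j + e_i *)
Definition act m (B : 'M['F_2]_m) (e : 'rV['F_2]_m) (u : monomial m) : Rm m :=
  [ffun v : pt m => \prod_(i in u)
      (v i + \sum_(j < m | (j < i)%N) B i j * v j + e 0 i)].

Definition ltaorb m (G : 'M['F_2]_m -> 'rV['F_2]_m -> Prop) (u : monomial m)
  : Rm m -> Prop := fun p => exists B e, G B e /\ p = act B e u.
Definition Sadd m (S T : Rm m -> Prop) : Rm m -> Prop :=
  fun p => exists s t, S s /\ T t /\ p = Radd s t.
Definition Smul m (S T : Rm m -> Prop) : Rm m -> Prop :=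
  fun p => exists s t, S s /\ T t /\ p = Rmul s t.

(* Main.v *)
Require Import Defs.
From mathcomp Require Import all_boot all_order all_algebra.
From mathcomp Require Import ring zify.
Import GRing.Theory.
Set Implicit Arguments. Unset Strict Implicit. Unset Printing Implicit Defensive.
Local Open Scope ring_scope.
Lemma F2P (x : 'F_2) : x = 0 \/ x = 1.
Proof. case: x => [[|[|n]] Hn]; [left|right|]; try by apply/val_inj. by []. Qed.
Lemma F2_lem (a b : 'F_2) : (a + b + 1 = 1) <-> (a = b).
Proof. case: (F2P a) => ->; case: (F2P b) => ->; split => /eqP H; apply/eqP; move: H; by []. Qed.
Lemma mulF2eq (a b : 'F_2) : (a * b == 1) = (a == 1) && (b == 1).
Proof. by case: (F2P a) => ->; case: (F2P b) => ->. Qed.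
Lemma F2eq (a b : 'F_2) : (a == 1) = (b == 1) -> a = b.
Proof. case: (F2P a) => ->; case: (F2P b) => -> // H; move: H; by []. Qed.
Lemma F11 : (1 : 'F_2) + 1 = 0. Proof. by apply/eqP. Qed.

Lemma prodF2 m (u : {set 'I_m}) (x : 'I_m -> 'F_2) :
  (\prod_(i in u) x i == 1) = [forall i in u, x i == 1].
Proof.
apply/idP/forall_inP => [H i iu|H].
  case: (F2P (x i)) => [Hx|->//]. by rewrite (bigD1 i) //= Hx mul0r in H.
by rewrite big1 // => i /H/eqP.
Qed.

Definition fixF (V : Type) (m : nat) (F : ('I_m -> V) -> 'I_m -> V) (x0 : 'I_m -> V) :=
  iter m F x0.
Lemma fixFE V m (F : ('I_m -> V) -> 'I_m -> V) x0 :
  (forall X Y (k : 'I_m), (forall j : 'I_m, (j < k)%N -> X j = Y j) -> F X k = F Y k) ->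
  forall k, fixF F x0 k = F (fixF F x0) k.
Proof.
move=> Floc.
have stab : forall n (k : 'I_m), (k < n)%N -> iter n.+1 F x0 k = iter n F x0 k.
  elim=> [//|n IH] k' Hk /=. apply: Floc => j Hj. apply: IH. lia.
move=> k; rewrite /fixF -stab ?ltn_ord //.
Qed.

Definition Cmat m (W : {set 'I_m}) (B : 'M['F_2]_m) : 'I_m -> {ffun 'I_m -> 'F_2} :=
  @fixF {ffun 'I_m -> 'F_2} m (fun X k => if k \in W then [ffun j' => \sum_(j < m | (j < k)%N) B k j * X j j']
                   else [ffun j' => ((j' == k) : nat)%:R]) (fun _ => [ffun _ => 0]).
Definition dvec m (W : {set 'I_m}) (B : 'M['F_2]_m) (e : 'rV['F_2]_m) : 'I_m -> 'F_2 :=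
  fixF (fun X k => if k \in W then 1 + e 0 k + \sum_(j < m | (j < k)%N) B k j * X j else 0)
       (fun _ => 0).
Definition wv m (W : {set 'I_m}) (B : 'M['F_2]_m) (e : 'rV['F_2]_m) (v : pt m) (k : 'I_m) : 'F_2 :=
  \sum_(j < m) Cmat W B k j * v j + dvec W B e k.
Definition lf m (B : 'M['F_2]_m) (e : 'rV['F_2]_m) (i : 'I_m) (v : pt m) : 'F_2 :=
  v i + \sum_(j < m | (j < i)%N) B i j * v j + e 0 i.

Lemma CmatE m (W : {set 'I_m}) (B : 'M['F_2]_m) (k : 'I_m) : Cmat W B k =
  if k \in W then [ffun j' => \sum_(j < m | (j < k)%N) B k j * Cmat W B j j']
  else [ffun j' => ((j' == k) : nat)%:R].
Proof.
rewrite /Cmat fixFE //. move=> X Y k' H; case: ifP => // _.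
apply/ffunP => j'; rewrite !ffunE; apply: eq_bigr => j Hj; by rewrite H.
Qed.
Lemma dvecE m (W : {set 'I_m}) (B : 'M['F_2]_m) (e : 'rV['F_2]_m) (k : 'I_m) : dvec W B e k =
  if k \in W then 1 + e 0 k + \sum_(j < m | (j < k)%N) B k j * dvec W B e j else 0.
Proof.
rewrite /dvec fixFE //. move=> X Y k' H; case: ifP => // _.
congr (_ + _); apply: eq_bigr => j Hj; by rewrite H.
Qed.

Lemma Csupp m (W : {set 'I_m}) (B : 'M['F_2]_m) (k j : 'I_m) : Cmat W B k j != 0 -> (j \notin W) && (j <= k)%N.
Proof.
suff H : forall n (k j : 'I_m), (k < n)%N -> Cmat W B k j != 0 -> (j \notin W) && (j <= k)%N.
  exact: H k.+1 k j (ltnSn k).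
elim=> [//|n IH] k' j' Hk. rewrite CmatE. case: ifP => kW; rewrite ffunE.
  case: (boolP [exists i : 'I_m, (i < k')%N && (Cmat W B i j' != 0)]) =>
     [/existsP [i /andP [Hi Hij]] | /existsPn Hall].
    have /andP [-> Hji] := IH i j' ltac:(lia) Hij. move=> _. apply/leP. lia.
  rewrite big1 ?eqxx // => i Hi. have := Hall i; rewrite Hi /= negbK => /eqP ->.
  by rewrite mulr0.
case: (j' =P k') => [->|] _; last by rewrite eqxx.
by rewrite kW leqnn.
Qed.

Lemma wv_notin m (W : {set 'I_m}) (B : 'M['F_2]_m) (e : 'rV['F_2]_m) (v : pt m) (k : 'I_m) : k \notin W -> wv W B e v k = v k.
Proof.
move=> kW; rewrite /wv CmatE dvecE (negbTE kW) addr0.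
under eq_bigr do rewrite ffunE.
rewrite (bigD1 k) //= eqxx mul1r big1 ?addr0 // => j /negbTE ->; by rewrite mul0r.
Qed.

Lemma wv_in m (W : {set 'I_m}) (B : 'M['F_2]_m) (e : 'rV['F_2]_m) (v : pt m) (k : 'I_m) : k \in W ->
  wv W B e v k = 1 + e 0 k + \sum_(j < m | (j < k)%N) B k j * wv W B e v j.
Proof.
move=> kW; rewrite /wv CmatE dvecE kW.
under eq_bigr do rewrite ffunE.
have -> : \sum_(j < m | (j < k)%N) B k j * (\sum_(j0 < m) Cmat W B j j0 * v j0 + dvec W B e j)
   = \sum_(j' < m) (\sum_(j < m | (j < k)%N) B k j * Cmat W B j j') * v j'
     + \sum_(j < m | (j < k)%N) B k j * dvec W B e j.
  under eq_bigr do rewrite mulrDr.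
  rewrite big_split /=; congr (_ + _).
  under eq_bigr do rewrite mulr_sumr.
  rewrite exchange_big /=; apply: eq_bigr => j' _.
  rewrite mulr_suml; apply: eq_bigr => j _. by rewrite mulrA.
ring.
Qed.
Lemma keystep m (W : {set 'I_m}) (B : 'M['F_2]_m) (e : 'rV['F_2]_m) (v : pt m) (k : 'I_m) :
  k \in W -> (forall j : 'I_m, j \in W -> (j < k)%N -> v j = wv W B e v j) ->
  lf B e k v = v k + wv W B e v k + 1.
Proof.
move=> kW H; rewrite (wv_in _ _ _ kW) /lf.
have -> : \sum_(j < m | (j < k)%N) B k j * v j = \sum_(j < m | (j < k)%N) B k j * wv W B e v j.
  apply: eq_bigr => j Hj; case: (boolP (j \in W)) => jW; first by rewrite H.
  by rewrite wv_notin.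
set S := \sum_(j < m | _) _.
rewrite (_ : v k + (1 + e 0 k + S) + 1 = v k + S + e 0 k + (1 + 1)); last by ring.
by rewrite F11 addr0.
Qed.

Lemma mixed m (W : {set 'I_m}) (B : 'M['F_2]_m) (e : 'rV['F_2]_m) (U : {set 'I_m}) (v : pt m) :
  (forall i, i \in W -> if i \in U then lf B e i v = 1 else v i = wv W B e v i) <->
  (forall i, i \in W -> v i = wv W B e v i).
Proof.
split.
  move=> H.
  suff S : forall n (i : 'I_m), (i < n)%N -> i \in W -> v i = wv W B e v i.
    by move=> i; exact: S i.+1 i (ltnSn _).
  elim=> [//|n IH] i Hi iW. have := H i iW. case: ifP => // _ Hl.
  have := @keystep _ W B e v i iW (fun j jW Hj => IH j ltac:(lia) jW).
  by rewrite Hl => /esym/F2_lem.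
move=> H i iW. case: ifP => _; last exact: H.
rewrite (@keystep _ W B e v i iW (fun j jW _ => H j jW)) (H i iW).
by apply/F2_lem.
Qed.

Definition Bred m (W : {set 'I_m}) (B : 'M['F_2]_m) : 'M['F_2]_m :=
  \matrix_(i, j) if (j < i)%N then Cmat W B i j else ((i == j) : nat)%:R.
Definition ered m (W : {set 'I_m}) (B : 'M['F_2]_m) (e : 'rV['F_2]_m) : 'rV['F_2]_m :=
  \row_i (if i \in W then dvec W B e i + 1 else 0).

Lemma Bred_LTA m (W : {set 'I_m}) (B : 'M['F_2]_m) (e : 'rV['F_2]_m) :
  LTA_g W (Bred W B) (ered W B e).
Proof.
split; [split|split].
- move=> i j Hij; rewrite mxE ltnNge (ltnW Hij) /=.
  case: (i =P j) => [Hij'|//]; by rewrite Hij' ltnn in Hij.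
- by move=> i; rewrite mxE ltnn eqxx.
- by move=> i iN; rewrite mxE (negbTE iN).
- move=> i j Hji Hor; rewrite mxE Hji. case/orP: Hor => [iN|jW].
    rewrite CmatE (negbTE iN) ffunE. case: (j =P i) => // ji.
    by rewrite ji ltnn in Hji.
  case: (eqVneq (Cmat W B i j) 0) => // /Csupp /andP [jN _].
  by rewrite jW in jN.
Qed.

Lemma lf_red m (W : {set 'I_m}) (B : 'M['F_2]_m) (e : 'rV['F_2]_m) (v : pt m) (i : 'I_m) :
  i \in W -> lf (Bred W B) (ered W B e) i v = v i + wv W B e v i + 1.
Proof.
move=> iW; rewrite /lf /wv !mxE iW.
under eq_bigr => j Hj do rewrite mxE Hj.
have -> : \sum_(j < m | (j < i)%N) Cmat W B i j * v j = \sum_(j < m) Cmat W B i j * v j.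
  rewrite [RHS](bigID (fun j : 'I_m => (j < i)%N)) /= [X in _ = _ + X]big1 ?addr0 // => j Hj.
  case: (eqVneq (Cmat W B i j) 0) => [->|/Csupp/andP[jW' jle]]; first by rewrite mul0r.
  have ji : j = i by apply/val_inj/eqP; rewrite eqn_leq jle leqNgt.
  by rewrite ji iW in jW'.
ring.
Qed.
Lemma RmulE m (p q : Rm m) (v : pt m) : Rmul p q v = p v * q v.
Proof. by rewrite ffunE. Qed.
Lemma RaddE m (p q : Rm m) (v : pt m) : Radd p q v = p v + q v.
Proof. by rewrite ffunE. Qed.
Lemma actE m (B : 'M['F_2]_m) (e : 'rV['F_2]_m) (u : {set 'I_m}) (v : pt m) : act B e u v = \prod_(i in u) lf B e i v.
Proof. by rewrite ffunE. Qed.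

Lemma EA m (h : {set 'I_m}) (B1 : 'M['F_2]_m) (e1 : 'rV['F_2]_m) (v : pt m) :
  act B1 e1 h v = act (Bred h B1) (ered h B1 e1) h v.
Proof.
apply: F2eq; rewrite !actE !prodF2.
apply/forall_inP/forall_inP => H i ih.
  have Hall := (mixed h B1 e1 h v).1 (fun j jh => ltac:(rewrite jh; exact/eqP/H)).
  by rewrite lf_red // (Hall i ih); apply/eqP/F2_lem.
have Hall : forall j, j \in h -> v j = wv h B1 e1 v j.
  by move=> j jh; have := H j jh; rewrite lf_red // => /eqP/F2_lem.
by have := (mixed h B1 e1 h v).2 Hall i ih; rewrite ih => ->.
Qed.

Lemma partEq m (f h : {set 'I_m}) (B1 B2 : 'M['F_2]_m) (e1 e2 : 'rV['F_2]_m) (v : pt m) : h \subset f ->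
  let Bf := \matrix_(i, j) if i \in h then B1 i j else B2 i j in
  let ef := \row_i (if i \in h then e1 0 i else e2 0 i) in
  act B1 e1 h v * act B2 e2 (f :\: h) v
  = act B1 e1 h v * act (Bred f Bf) (ered f Bf ef) (f :\: h) v.
Proof.
move=> hf Bf ef.
have key : forall i, i \in h -> lf Bf ef i v = lf B1 e1 i v.
  move=> i ih; rewrite /lf !mxE ih; congr (_ + _ + _).
  by apply: eq_bigr => j _; rewrite mxE ih.
have key2 : forall i, i \notin h -> lf Bf ef i v = lf B2 e2 i v.
  move=> i ih; rewrite /lf !mxE (negbTE ih); congr (_ + _ + _).
  by apply: eq_bigr => j _; rewrite mxE (negbTE ih).
apply: F2eq; rewrite !mulF2eq !actE !prodF2.
apply/idP/idP => /andP [/forall_inP Hh /forall_inP Hf]; apply/andP; split;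
  try by apply/forall_inP.
  apply/forall_inP => i ifh.
  have Hall : forall j, j \in f -> v j = wv f Bf ef v j.
    apply: (mixed f Bf ef f v).1 => j jf; rewrite jf.
    case: (boolP (j \in h)) => jh; first by rewrite key //; exact/eqP/Hh.
    by rewrite key2 //; apply/eqP/Hf; rewrite in_setD jh jf.
  move: ifh; rewrite in_setD => /andP [_ iF].
  by rewrite lf_red // (Hall i iF); apply/eqP/F2_lem.
apply/forall_inP => i ifh.
have Hall : forall j, j \in f -> v j = wv f Bf ef v j.
  apply: (mixed f Bf ef h v).1 => j jf; case: ifP => jh.
    by rewrite key //; exact/eqP/Hh.
  have := Hf j; rewrite in_setD jh jf => /(_ isT).
  by rewrite lf_red // => /eqP/F2_lem.
move: ifh; rewrite in_setD => /andP [ih iF].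
have := (mixed f Bf ef f v).2 Hall i iF; rewrite iF -key2 // => ->.
by [].
Qed.

Theorem lemma2 (m : nat) (I : {set monomial m}) (f g : monomial m) :
  (1 <= m)%N ->
  decreasing I ->
  f \in I -> deg f = maxdeg I ->
  g \in I -> deg g = maxdeg I ->
  let h := mgcd f g in
  forall p : Rm m,
    Smul (ltaorb (@LTA m) h)
      (Sadd (ltaorb (@LTA m) (mdiv f h)) (ltaorb (@LTA m) (mdiv g h))) p
    <->
    Smul (ltaorb (LTA_g h) h)
      (Sadd (ltaorb (LTA_g f) (mdiv f h)) (ltaorb (LTA_g g) (mdiv g h))) p.
Proof.
move=> _ _ _ _ _ _ h p; split; last first.
  case=> a [s [[B1 [e1 [[H1 _] ->]]] [[t1 [t2 [[B2 [e2 [[H2 _] ->]]] [[B3 [e3 [[H3 _] ->]]] ->]]]] ->]]].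
  exists (act B1 e1 h), (Radd (act B2 e2 (mdiv f h)) (act B3 e3 (mdiv g h))).
  split; first by exists B1, e1.
  split=> //; exists (act B2 e2 (mdiv f h)), (act B3 e3 (mdiv g h)).
  split; first by exists B2, e2.
  split=> //; by exists B3, e3.
case=> a [s [[B1 [e1 [_ ->]]] [[t1 [t2 [[B2 [e2 [_ ->]]] [[B3 [e3 [_ ->]]] ->]]]] ->]]].
pose Bf := \matrix_(i, j) if i \in h then B1 i j else B2 i j.
pose ef := \row_i (if i \in h then e1 0 i else e2 0 i).
pose Bg := \matrix_(i, j) if i \in h then B1 i j else B3 i j.
pose eg := \row_i (if i \in h then e1 0 i else e3 0 i).
exists (act (Bred h B1) (ered h B1 e1) h),
  (Radd (act (Bred f Bf) (ered f Bf ef) (mdiv f h)) (act (Bred g Bg) (ered g Bg eg) (mdiv g h))).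
split; first by exists (Bred h B1), (ered h B1 e1); split=> //; exact: Bred_LTA.
split.
  exists (act (Bred f Bf) (ered f Bf ef) (mdiv f h)), (act (Bred g Bg) (ered g Bg eg) (mdiv g h)).
  split; first by exists (Bred f Bf), (ered f Bf ef); split=> //; exact: Bred_LTA.
  split=> //; by exists (Bred g Bg), (ered g Bg eg); split=> //; exact: Bred_LTA.
apply/ffunP => v; rewrite !RmulE !RaddE.
have hf : h \subset f by rewrite /h /mgcd subsetIl.
have hg : h \subset g by rewrite /h /mgcd subsetIr.
rewrite /mdiv mulrDr (@partEq m f h B1 B2 e1 e2 v hf) (@partEq m g h B1 B3 e1 e3 v hg) -mulrDr (@EA m h B1 e1 v).
by [].
Qed.
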